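(* Let $k$ be a finite field of odd characteristic, $b:V\times V\to W$ a non-degenerate Hermitian $k$-bilinear map, and $\mathcal{X}$ a direct sum decomposition of $V$ with associated set $\mathcal{E}=\mathcal{E}(\mathcal{X})$ of supplementary idempotents. (i) $\mathcal{E}\subseteq\operatorname{Sym}(b)$ if and only if $\mathcal{X}$ is a $\perp$-decomposition of $b$. (ii) $\mathcal{X}$ is a fully refined $\perp$-decomposition of $b$ if and only if $\mathcal{E}$ is a frame of the Jordan algebra $\operatorname{Sym}(b)$. (iii) If $\mathcal{X}$ is a $\perp$-decomposition and $(\alpha,\hat\alpha)\in\operatorname{Isom}^*(b)$, then $\mathcal{X}\alpha=\mathcal{X}(\alpha^{-1}\mathcal{E}\alpha)$ and $\alpha^{-1}\mathcal{E}\alpha=\mathcal{E}(\mathcal{X}\alpha)$, where $\alpha^{-1}\mathcal{E}\alpha=\{\alpha^{-1}e\alpha: e\in\mathcal{E}\}$. In particular $\operatorname{Isom}^*(b)$ acts (by conjugation) on the set of all frames of $\operatorname{Sym}(b)$.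
   Context: $b$ is Hermitian if $W=b(V,V)$ and $b(u,v)=b(v,u)\theta$ for some $\theta\in\mathrm{GL}(W)$; non-degenerate if $b(u,V)=0=b(V,u)$ implies $u=0$. $\operatorname{Sym}(b)=\{f\in\operatorname{End}V: b(uf,v)=b(u,vf)\ \forall u,v\}$, a Jordan algebra under $x\bullet y=\tfrac12(xy+yx)$. For a direct decomposition $\mathcal{X}$ of $V$, $\mathcal{E}(\mathcal{X})$ is the set of projections $e_X$ ($X\in\mathcal{X}$) onto $X$ along the sum of the other members; for a set $\mathcal{F}$ of supplementary idempotents (pairwise orthogonal, summing to $1$) of $\operatorname{End}V$, $\mathcal{X}(\mathcal{F})=\{Vf: f\in\mathcal{F}\}$. A $\perp$-decomposition of $b$ is a set of subspaces, pairwise $b$-orthogonal ($b(X,Y)=0$ for distinct $X,Y$), generating $V$, with no proper subset generating $V$; it is fully refined if each restriction $b_X:X\times X\to b(X,X)$ has no $\perp$-decomposition other than $\{X\}$. In a Jordan algebra, idempotents $e,f$ are orthogonal if $e\bullet f=efe=fef=0$; an idempotent is primitive if it is not a sum of two proper (non-zero, non-identity) orthogonal idempotents; a frame is a set of primitive pairwise orthogonal idempotents summing to $1$. $\operatorname{Isom}^*(b)=\{(\alpha,\hat\alpha)\in\mathrm{GL}(V)\times\mathrm{GL}(W): b(u\alpha,v\alpha)=b(u,v)\hat\alpha\}$. *)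

(* Defs.v *)
(* V = 'rV[k]_n, W = 'rV[k]_m; endomorphisms are n x n
   matrices acting on the RIGHT of row vectors (u *m f), matching the
   paper's convention uf and composition ef = "first e then f". *)
From HB Require Import structures.
From mathcomp Require Import all_boot all_order all_algebra.
Set Implicit Arguments. Unset Strict Implicit. Unset Printing Implicit Defensive.
Import GRing.Theory.
Local Open Scope ring_scope.

Definition bilinear_map (k : fieldType) (n m : nat)
    (b : 'rV[k]_n -> 'rV[k]_n -> 'rV[k]_m) : Prop :=
  (forall (a : k) u1 u2 v, b (a *: u1 + u2) v = a *: b u1 v + b u2 v) /\
  (forall (a : k) u v1 v2, b u (a *: v1 + v2) = a *: b u v1 + b u v2).

Definition spans_codomain (k : finFieldType) (n m : nat)
    (b : 'rV[k]_n -> 'rV[k]_n -> 'rV[k]_m) : Prop :=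
  ((\sum_(u : 'rV[k]_n) \sum_(v : 'rV[k]_n) <<b u v>>) == 1%:M)%MS.

Definition hermitian_map (k : finFieldType) (n m : nat)
    (b : 'rV[k]_n -> 'rV[k]_n -> 'rV[k]_m) : Prop :=
  spans_codomain b /\
  exists theta : 'M[k]_m, theta \in unitmx /\ forall u v, b u v = b v u *m theta.

Definition nondegenerate_map (k : fieldType) (n m : nat)
    (b : 'rV[k]_n -> 'rV[k]_n -> 'rV[k]_m) : Prop :=
  forall u, (forall v, b u v = 0) -> (forall v, b v u = 0) -> u = 0.

Definition Sym (k : fieldType) (n m : nat)
    (b : 'rV[k]_n -> 'rV[k]_n -> 'rV[k]_m) (f : 'M[k]_n) : Prop :=
  forall u v, b (u *m f) v = b u (v *m f).

Definition jprod (k : fieldType) (n : nat) (x y : 'M[k]_n) : 'M[k]_n :=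
  (2%:R : k)^-1 *: (x *m y + y *m x).

Definition sym_idem (k : fieldType) (n m : nat)
    (b : 'rV[k]_n -> 'rV[k]_n -> 'rV[k]_m) (e : 'M[k]_n) : Prop :=
  Sym b e /\ jprod e e = e.

Definition jorth (k : fieldType) (n : nat) (e f : 'M[k]_n) : Prop :=
  jprod e f = 0 /\ e *m f *m e = 0 /\ f *m e *m f = 0.

Definition primitive (k : fieldType) (n m : nat)
    (b : 'rV[k]_n -> 'rV[k]_n -> 'rV[k]_m) (e : 'M[k]_n) : Prop :=
  sym_idem b e /\ e != 0 /\
  ~ (exists f g : 'M[k]_n,
        sym_idem b f /\ sym_idem b g /\ f != 0 /\ f != 1%:M /\
        g != 0 /\ g != 1%:M /\ jorth f g /\ e = f + g).

Definition frame (k : fieldType) (n m : nat)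
    (b : 'rV[k]_n -> 'rV[k]_n -> 'rV[k]_m) (J : finType) (F : J -> 'M[k]_n) : Prop :=
  (forall j, primitive b (F j)) /\
  (forall i j, i != j -> jorth (F i) (F j)) /\
  \sum_(j : J) F j = 1%:M.

Definition isom_star (k : fieldType) (n m : nat)
    (b : 'rV[k]_n -> 'rV[k]_n -> 'rV[k]_m) (alpha : 'M[k]_n) (alphah : 'M[k]_m) : Prop :=
  [/\ alpha \in unitmx, alphah \in unitmx &
      forall u v, b (u *m alpha) (v *m alpha) = b u v *m alphah].

Definition direct_decomp (k : fieldType) (n : nat) (I : finType) (X : I -> 'M[k]_n) : Prop :=
  [/\ forall i, X i != 0, mxdirect (\sum_i X i) & (\sum_i X i == 1%:M)%MS].

Definition projE (k : fieldType) (n : nat) (I : finType) (X : I -> 'M[k]_n) (i : I) : 'M[k]_n :=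
  proj_mx (X i) (\sum_(j | j != i) X j)%MS.

(* X(F) = {V f : f in F}: row space of f is V f (f = 1 *m f) *)

Definition perp_decomp_in (k : fieldType) (n m : nat)
    (b : 'rV[k]_n -> 'rV[k]_n -> 'rV[k]_m) (U : 'M[k]_n) (J : finType) (Y : J -> 'M[k]_n) : Prop :=
  [/\ forall j, (Y j <= U)%MS,
      forall i j, i != j -> forall u v : 'rV[k]_n,
        (u <= Y i)%MS -> (v <= Y j)%MS -> b u v = 0,
      (U <= \sum_j Y j)%MS &
      forall S : {set J}, S != setT -> ~~ (U <= \sum_(j in S) Y j)%MS].

Definition perp_decomp (k : fieldType) (n m : nat)
    (b : 'rV[k]_n -> 'rV[k]_n -> 'rV[k]_m) (I : finType) (X : I -> 'M[k]_n) : Prop :=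
  perp_decomp_in b 1%:M X.

Definition fully_refined (k : fieldType) (n m : nat)
    (b : 'rV[k]_n -> 'rV[k]_n -> 'rV[k]_m) (I : finType) (X : I -> 'M[k]_n) : Prop :=
  perp_decomp b X /\
  forall (i : I) (J : finType) (Y : J -> 'M[k]_n),
    perp_decomp_in b (X i) Y -> forall j, (Y j == X i)%MS.

(* Main.v *)
Require Import Defs.
From HB Require Import structures.
From mathcomp Require Import all_boot all_order all_algebra.
Set Implicit Arguments. Unset Strict Implicit. Unset Printing Implicit Defensive.
Import GRing.Theory.
Local Open Scope ring_scope.

Section Mx.
Variables (k : fieldType) (n : nat).

Lemma agree_adds p1 p2 (U1 : 'M[k]_(p1, n)) (U2 : 'M_(p2, n)) (M N : 'M_n) :
  (forall u : 'rV_n, (u <= U1)%MS -> u *m M = u *m N) ->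
  (forall u : 'rV_n, (u <= U2)%MS -> u *m M = u *m N) ->
  (forall u : 'rV_n, (u <= U1 + U2)%MS -> u *m M = u *m N).
Proof.
move=> H1 H2 u /sub_addsmxP[w ->].
by rewrite !mulmxDl H1 ?submxMl // H2 ?submxMl.
Qed.

Lemma agree_full p (U : 'M[k]_(p, n)) (M N : 'M_n) :
  (1%:M <= U)%MS ->
  (forall u : 'rV_n, (u <= U)%MS -> u *m M = u *m N) -> M = N.
Proof.
move=> hU H; apply/row_matrixP => r.
rewrite -[M]mul1mx -[N]mul1mx !row_mul; apply: H.
exact: submx_trans (row_sub r 1%:M) hU.
Qed.

Lemma idem_sub p q (u : 'M[k]_(p, n)) (P : 'M_(q, n)) (Q : 'M_n) :
  (u <= P)%MS -> P *m Q = P -> u *m Q = u.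
Proof. by case/submxP=> D ->; rewrite -mulmxA => ->. Qed.

Lemma sub_rows_zero p (U : 'M[k]_(p, n)) :
  (forall u : 'rV_n, (u <= U)%MS -> u = 0) -> U = 0.
Proof.
by move=> H; apply/row_matrixP => r; rewrite row0; apply: H; exact: row_sub.
Qed.

End Mx.
Section Bil.
Variables (k : fieldType) (n m : nat) (b : 'rV[k]_n -> 'rV[k]_n -> 'rV[k]_m).
Hypothesis Hbil : bilinear_map b.

Lemma bDl u1 u2 v : b (u1 + u2) v = b u1 v + b u2 v.
Proof. by have := (proj1 Hbil) 1 u1 u2 v; rewrite !scale1r. Qed.
Lemma bDr u v1 v2 : b u (v1 + v2) = b u v1 + b u v2.
Proof. by have := (proj2 Hbil) 1 u v1 v2; rewrite !scale1r. Qed.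
Lemma b0l v : b 0 v = 0.
Proof. by apply: (@addrI _ (b 0 v)); rewrite -bDl !addr0. Qed.
Lemma b0r u : b u 0 = 0.
Proof. by apply: (@addrI _ (b u 0)); rewrite -bDr !addr0. Qed.
Lemma bNl u v : b (- u) v = - b u v.
Proof. by apply/eqP; rewrite -subr_eq0 opprK -bDl addNr b0l. Qed.
Lemma bNr u v : b u (- v) = - b u v.
Proof. by apply/eqP; rewrite -subr_eq0 opprK -bDr addNr b0r. Qed.
Lemma bsuml (J : Type) (r : seq J) (P : pred J) (F : J -> 'rV_n) v :
  b (\sum_(j <- r | P j) F j) v = \sum_(j <- r | P j) b (F j) v.
Proof. by elim/big_rec2: _ => [|j x y _ <-]; rewrite ?b0l ?bDl. Qed.
Lemma bsumr (J : Type) (r : seq J) (P : pred J) (F : J -> 'rV_n) u :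
  b u (\sum_(j <- r | P j) F j) = \sum_(j <- r | P j) b u (F j).
Proof. by elim/big_rec2: _ => [|j x y _ <-]; rewrite ?b0r ?bDr. Qed.

Definition ortho p q (U : 'M[k]_(p, n)) (W : 'M[k]_(q, n)) :=
  forall u v : 'rV_n, (u <= U)%MS -> (v <= W)%MS -> b u v = 0 /\ b v u = 0.

Lemma ortho_sym p q (U : 'M_(p, n)) (W : 'M_(q, n)) : ortho U W -> ortho W U.
Proof. by move=> H u v hu hv; have [? ?] := H v u hv hu. Qed.

Lemma ortho_subl p p' q (U : 'M_(p, n)) (U' : 'M_(p', n)) (W : 'M_(q, n)) :
  (U' <= U)%MS -> ortho U W -> ortho U' W.
Proof. by move=> s H u v hu hv; apply: H (submx_trans hu s) hv. Qed.

Lemma ortho_addl p1 p2 q (U1 : 'M_(p1, n)) (U2 : 'M_(p2, n)) (W : 'M_(q, n)) :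
  ortho U1 W -> ortho U2 W -> ortho (U1 + U2)%MS W.
Proof.
move=> H1 H2 u v /sub_addsmxP[w ->] hv.
have [a1 a2] := H1 _ v (submxMl w.1 U1) hv.
have [c1 c2] := H2 _ v (submxMl w.2 U2) hv.
by rewrite bDl bDr a1 a2 c1 c2 addr0.
Qed.

Lemma ortho0l q (W : 'M_(q, n)) p : ortho (0 : 'M_(p, n)) W.
Proof. by move=> u v /submx0null -> _; rewrite b0l b0r. Qed.

Lemma ortho_suml (J : finType) (P : pred J) (Y : J -> 'M_n) q (W : 'M_(q, n)) :
  (forall j, P j -> ortho (Y j) W) -> ortho (\sum_(j | P j) Y j)%MS W.
Proof.
move=> H; elim/big_rec: _ => [|j S Pj IH]; first exact: ortho0l.
by apply: ortho_addl => //; apply: H.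
Qed.


Hypothesis Hnd : nondegenerate_map b.

Lemma ortho_full p (U : 'M_(p, n)) : ortho U 1%:M -> U = 0.
Proof.
move=> H; apply: sub_rows_zero => u hu; apply: Hnd => v.
  by case: (H u v hu (submx1 _)).
by case: (H u v hu (submx1 _)).
Qed.

Lemma sym_proj (A C : 'M_n) : ortho A C -> (1%:M <= A + C)%MS -> Sym b (proj_mx A C).
Proof.
move=> H hAC u v.
have hu : (u <= A + C)%MS := submx_trans (submx1 u) hAC.
have hv : (v <= A + C)%MS := submx_trans (submx1 v) hAC.
set P := proj_mx A C.
have -> : b (u *m P) v = b (u *m P) (v *m P) + b (u *m P) (v - v *m P).
  by rewrite -bDr addrC subrK.
have -> : b u (v *m P) = b (u *m P) (v *m P) + b (u - u *m P) (v *m P).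
  by rewrite -bDl addrC subrK.
have [-> _] := H _ _ (proj_mx_sub A C u) (proj_mx_compl_sub hv).
have [_ ->] := H _ _ (proj_mx_sub A C v) (proj_mx_compl_sub hu).
by rewrite !addr0.
Qed.

End Bil.
Section Dec.
Variables (k : fieldType) (n : nat) (I : finType) (X : I -> 'M[k]_n).
Hypothesis HX : direct_decomp X.

Definition Zc i := (\sum_(j | j != i) X j)%MS.

Lemma Xneq0 i : X i != 0.
Proof. by case: HX. Qed.

Lemma capZ i : (X i :&: Zc i = 0)%MS.
Proof.
case: HX => _ /mxdirect_sumsP H _.
by have := H i isT; rewrite /Zc.
Qed.

Lemma projE_id p i (u : 'M_(p, n)) : (u <= X i)%MS -> u *m projE X i = u.
Proof. by move=> hu; apply: proj_mx_id hu; exact: capZ. Qed.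

Lemma projE_0 p i j (u : 'M_(p, n)) : j != i -> (u <= X j)%MS -> u *m projE X i = 0.
Proof.
move=> ji hu; apply: proj_mx_0; first exact: capZ.
exact: (sumsmx_sup j) ji hu.
Qed.

Lemma full_sum : (1%:M <= \sum_i X i)%MS.
Proof. by case: HX => _ _ /eqmxP->. Qed.

Lemma agree_sums (J : finType) (P : pred J) (Y : J -> 'M[k]_n) (M N : 'M_n) :
  (forall j (u : 'rV_n), P j -> (u <= Y j)%MS -> u *m M = u *m N) ->
  (forall u : 'rV_n, (u <= \sum_(j | P j) Y j)%MS -> u *m M = u *m N).
Proof.
move=> H; elim/big_rec: _ => [|j S Pj IH].
  by move=> u /submx0null ->; rewrite !mul0mx.
by apply: agree_adds => // u; apply: H.
Qed.

Lemma agreeX (M N : 'M_n) :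
  (forall j (u : 'rV_n), (u <= X j)%MS -> u *m M = u *m N) -> M = N.
Proof.
move=> H; apply: agree_full full_sum _.
by apply: agree_sums => j u _; apply: H.
Qed.

Lemma projE_sum : \sum_i projE X i = 1%:M.
Proof.
apply: agreeX => j u hu; rewrite mulmx1 mulmx_sumr (bigD1 j) //= projE_id //.
by rewrite big1 ?addr0 // => i ij; apply: projE_0 hu; rewrite eq_sym.
Qed.

Lemma projE_sub i : (projE X i <= X i)%MS.
Proof. by rewrite -[projE X i]mul1mx; apply: proj_mx_sub. Qed.

Lemma projE_eqmx i : (projE X i == X i)%MS.
Proof.
apply/andP; split; first exact: projE_sub.
by rewrite -{1}(projE_id (submx_refl (X i))) submxMl.
Qed.

Lemma projE_idem i : projE X i *m projE X i = projE X i.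
Proof. exact: projE_id (projE_sub i). Qed.

Lemma projE_orth i j : i != j -> projE X i *m projE X j = 0.
Proof. by move=> ij; apply: projE_0 ij (projE_sub i). Qed.

Lemma projE_neq0 i : projE X i != 0.
Proof.
apply: contraNneq (Xneq0 i) => e0.
by rewrite -submx0 -(eqmxP (projE_eqmx i)) e0 submx0.
Qed.

Lemma X_notin_Zc i : ~~ (X i <= Zc i)%MS.
Proof.
apply: contraNN (Xneq0 i) => s.
by rewrite -submx0 -(capZ i) sub_capmx submx_refl.
Qed.

Lemma minimal_X (S : {set I}) : S != setT -> ~~ (1%:M <= \sum_(j in S) X j)%MS.
Proof.
move=> /eqP nS.
have [i iS] : exists i, i \notin S.
  case: (pickP (fun i => i \notin S)) => [i H|H]; first by exists i.
  by exfalso; apply: nS; apply/setP => x; rewrite inE; move: (H x) => /negbFE.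
apply/negP => s; move/negP: (X_notin_Zc i); apply.
apply: submx_trans (submx1 _) _; apply: submx_trans s _.
apply/sumsmx_subP => j jS; apply: sumsmx_sup (submx_refl _).
by apply: contraNneq iS => <-.
Qed.

End Dec.

Section Jor.
Variables (k : fieldType) (n : nat).
Hypothesis H2 : (2%:R : k) != 0.

Lemma jprod_idem (e : 'M[k]_n) : jprod e e = e <-> e *m e = e.
Proof.
rewrite /jprod -mulr2n -scaler_nat scalerA mulVf // scale1r; split => //.
Qed.

Lemma jprod0 (f g : 'M[k]_n) : f *m g = 0 -> g *m f = 0 -> jprod f g = 0.
Proof. by rewrite /jprod => -> ->; rewrite addr0 scaler0. Qed.

Lemma jorth_mul (f g : 'M[k]_n) : f *m f = f -> jorth f g -> f *m g = 0 /\ g *m f = 0.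
Proof.
move=> ff [jfg [fgf _]].
have s : f *m g + g *m f = 0.
  move/eqP: jfg; rewrite /jprod scaler_eq0 invr_eq0 (negPf H2) /=.
  by move/eqP.
have fg : f *m g = 0.
  have := congr1 (mulmx f) s; rewrite mulmxDr !mulmxA ff fgf addr0.
  by rewrite mulmx0.
by split => //; move: s; rewrite fg add0r.
Qed.

End Jor.

Section Main.
Variables (k : fieldType) (n m : nat) (b : 'rV[k]_n -> 'rV[k]_n -> 'rV[k]_m).
Hypothesis Hbil : bilinear_map b.
Hypothesis Hnd : nondegenerate_map b.
Hypothesis H2 : (2%:R : k) != 0.

Lemma orth_idem (h q : 'M[k]_n) (u v : 'rV_n) :
  Sym b h -> h *m h = h -> q *m q = q -> q *m h = 0 ->
  (u <= h)%MS -> (v <= q)%MS -> b u v = 0.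
Proof.
move=> sh hh qq qh hu hv.
rewrite -(idem_sub hu hh) sh -(idem_sub hv qq) -mulmxA qh mulmx0.
by rewrite (b0r Hbil).
Qed.

Lemma cap3 (P Q R : 'M[k]_n) : ortho b P Q -> ortho b P R -> ortho b Q R ->
  (1%:M <= P + Q + R)%MS -> (P :&: (Q + R) = 0)%MS.
Proof.
move=> oPQ oPR oQR full; apply: (ortho_full Hnd).
have oW : ortho b (P :&: (Q + R))%MS (P + Q + R)%MS.
  apply: ortho_sym; apply: (ortho_addl Hbil); first apply: (ortho_addl Hbil).
  - apply: ortho_sym; apply: ortho_subl (capmxSr _ _) _; apply: (ortho_addl Hbil); exact: ortho_sym.
  - apply: ortho_sym; exact: ortho_subl (capmxSl _ _) oPQ.
  - apply: ortho_sym; exact: ortho_subl (capmxSl _ _) oPR.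
by move=> u v hu _; apply: oW hu (submx_trans (submx1 v) full).
Qed.

Variables (I : finType) (X : I -> 'M[k]_n).
Hypothesis HX : direct_decomp X.

Definition orthX := forall i j, i != j -> ortho b (X i) (X j).

Lemma orth_Zc : orthX -> forall i, ortho b (X i) (Zc X i).
Proof.
move=> H i; apply: ortho_sym; apply: (ortho_suml Hbil) => j ji.
exact: H j i ji.
Qed.

Lemma full_iZ i : (1%:M <= X i + Zc X i)%MS.
Proof. by have := full_sum HX; rewrite (bigD1 i) //=. Qed.

Lemma sym_of_orth : orthX -> forall i, Sym b (projE X i).
Proof. by move=> H i; apply: sym_proj => //; [exact: orth_Zc | exact: full_iZ]. Qed.

Lemma orth_of_sym : (forall i, Sym b (projE X i)) -> orthX.
Proof.
move=> H i j ij u v hu hv; split.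
  rewrite -(projE_id HX hu) H (projE_0 HX _ hv) ?(b0r Hbil) //.
  by rewrite eq_sym.
by rewrite -(projE_id HX hv) H (projE_0 HX ij hu) (b0r Hbil).
Qed.

Lemma orth_of_perp : perp_decomp b X -> orthX.
Proof.
case=> _ H _ _ i j ij u v hu hv; split; first exact: H hu hv.
by apply: H hv hu; rewrite eq_sym.
Qed.

Lemma perp_of_orth : orthX -> perp_decomp b X.
Proof.
move=> H; split.
- by move=> j; exact: submx1.
- by move=> i j ij u v hu hv; case: (H i j ij u v hu hv).
- exact: full_sum.
- exact: minimal_X.
Qed.

Lemma notin_exists (J : finType) (S : {set J}) : S != setT -> exists x, x \notin S.
Proof.
move=> /eqP nS.
case: (pickP (fun i => i \notin S)) => [i H|H]; first by exists i.
by exfalso; apply: nS; apply/setP => x; rewrite inE; move: (H x) => /negbFE.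
Qed.

Lemma primitive_of_refined : fully_refined b X -> forall i, primitive b (projE X i).
Proof.
case=> Hp Hr i.
have oX := orth_of_perp Hp.
have se := sym_of_orth oX i.
split; first by split => //; apply/(jprod_idem H2); exact: projE_idem.
split; first exact: projE_neq0.
case=> f [g [[sf /(jprod_idem H2 _) ff] [[sg /(jprod_idem H2 _) gg]
  [f0 [f1 [g0 [g1 [jo ef]]]]]]]].
have [fg gf] := jorth_mul H2 ff jo.
pose Y := fun x : bool => if x then f else g.
have Yidem : forall x, Y x *m Y x = Y x by case.
have Yorth : forall x, Y x *m Y (~~ x) = 0 by case.
have Yne0 : forall x, Y x != 0 by case.
have YX : forall x, (Y x <= X i)%MS.
  move=> x; have e : Y x *m projE X i = Y x.
    by case: x; rewrite /Y ef mulmxDr ?ff ?fg ?gf ?gg ?addr0 ?add0r.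
  rewrite -e.
  exact: submx_trans (submxMl (Y x) (projE X i)) (projE_sub X i).
have Hpd : perp_decomp_in b (X i) Y.
  split => //.
  - move=> x y xy u v hu hv; case: x y xy hu hv => [] [] // _ hu hv.
      exact: (orth_idem sf ff gg gf hu hv).
    exact: (orth_idem sg gg ff fg hu hv).
  - rewrite big_bool /=; apply: (submx_trans (proj2 (andP (projE_eqmx HX i)))).
    by rewrite ef; apply: addmx_sub_adds; exact: submx_refl.
  - move=> S /notin_exists [x xS]; apply/negP => sX.
    have sY : (\sum_(j in S) Y j <= Y (~~ x))%MS.
      apply/sumsmx_subP => j jS; have -> : j = ~~ x.
        by case: j x jS xS => [] [] // ->.
      exact: submx_refl.
    have hx : (Y x <= Y (~~ x))%MS := submx_trans (YX x) (submx_trans sX sY).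
    by move/eqP: (Yne0 x); apply; rewrite -(idem_sub hx (Yidem (~~ x))) Yorth.
have := Hr i _ Y Hpd.
move=> H; have /andP[h1 _] := H true; have /andP[_ h2] := H false.
have hf : (f <= g)%MS := submx_trans h1 h2.
by move/eqP: f0; apply; rewrite -(idem_sub hf gg) fg.
Qed.

Lemma refined_of_primitive : (forall i, primitive b (projE X i)) ->
  forall i (J : finType) (Y : J -> 'M_n), perp_decomp_in b (X i) Y ->
  forall j, (Y j == X i)%MS.
Proof.
move=> Hprim i J Y [sY oY cov mn] j0.
have oX : orthX := orth_of_sym (fun l => proj1 (proj1 (Hprim l))).
apply/andP; split; first exact: sY.
apply/negP => nsub.
have oXZ : ortho b (X i) (Zc X i) := orth_Zc oX (i:=i).
have oYp : forall a c, a != c -> ortho b (Y a) (Y c).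
  move=> a c ac u v hu hv; split; first exact: oY ac u v hu hv.
  by apply: oY v u hv hu; rewrite eq_sym.
set A := Y j0.
set B := (\sum_(j | j != j0) Y j)%MS.
set Z := Zc X i.
have oAB : ortho b A B.
  by apply: ortho_sym; apply: (ortho_suml Hbil) => j jj0; exact: oYp.
have sB : (B <= X i)%MS by apply/sumsmx_subP => j _; exact: sY.
have oAZ : ortho b A Z := ortho_subl (sY j0) oXZ.
have oBZ : ortho b B Z := ortho_subl sB oXZ.
have covX : (X i <= A + B)%MS by move: cov; rewrite (bigD1 j0).
have full : (1%:M <= A + B + Z)%MS.
  by apply: submx_trans (full_iZ i) _; apply: addsmxS covX (submx_refl _).
have full' : (1%:M <= B + A + Z)%MS by rewrite (addsmxC B).
have capA : (A :&: (B + Z) = 0)%MS := cap3 oAB oAZ oBZ full.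
have capB : (B :&: (A + Z) = 0)%MS := cap3 (ortho_sym oAB) oBZ oAZ full'.
set f := proj_mx A (B + Z)%MS.
set g := proj_mx B (A + Z)%MS.
have sf : Sym b f.
  apply: (sym_proj Hbil); last by rewrite addsmxA.
  exact: (ortho_sym (ortho_addl Hbil (ortho_sym oAB) (ortho_sym oAZ))).
have sg : Sym b g.
  apply: (sym_proj Hbil); last by rewrite addsmxA.
  exact: (ortho_sym (ortho_addl Hbil oAB (ortho_sym oBZ))).
have ff : f *m f = f := proj_mx_proj capA.
have gg : g *m g = g := proj_mx_proj capB.
have fA : forall u : 'rV_n, (u <= A)%MS -> u *m f = u.
  by move=> u hu; exact: proj_mx_id capA hu.
have fB : forall u : 'rV_n, (u <= B)%MS -> u *m f = 0.
  by move=> u hu; exact: proj_mx_0 capA (submx_trans hu (addsmxSl B Z)).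
have fZ : forall u : 'rV_n, (u <= Z)%MS -> u *m f = 0.
  by move=> u hu; exact: proj_mx_0 capA (submx_trans hu (addsmxSr B Z)).
have gA : forall u : 'rV_n, (u <= A)%MS -> u *m g = 0.
  by move=> u hu; exact: proj_mx_0 capB (submx_trans hu (addsmxSl A Z)).
have gB : forall u : 'rV_n, (u <= B)%MS -> u *m g = u.
  by move=> u hu; exact: proj_mx_id capB hu.
have gZ : forall u : 'rV_n, (u <= Z)%MS -> u *m g = 0.
  by move=> u hu; exact: proj_mx_0 capB (submx_trans hu (addsmxSr A Z)).
have sfA : (f <= A)%MS by rewrite -[f]mul1mx proj_mx_sub.
have sgB : (g <= B)%MS by rewrite -[g]mul1mx proj_mx_sub.
have fg : f *m g = 0 := proj_mx_0 capB (submx_trans sfA (addsmxSl A Z)).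
have gf : g *m f = 0 := proj_mx_0 capA (submx_trans sgB (addsmxSl B Z)).
have A0 : A != 0.
  apply/eqP => A0; rewrite A0 in covX.
  have nS : [set j | j != j0] != setT.
    by apply/eqP => /setP /(_ j0); rewrite !inE eqxx.
  move: (mn _ nS); rewrite (eq_bigl (fun j => j != j0)) => [|j]; last by rewrite inE.
  move/negP; apply; apply: submx_trans covX _.
  by rewrite addsmx_sub sub0mx submx_refl.
have B0 : B != 0.
  apply/eqP => B0; apply: nsub; apply: submx_trans covX _.
  by rewrite B0 addsmx_sub sub0mx submx_refl.
have f0 : f != 0.
  apply: contraNneq A0 => f0; apply/eqP; apply: sub_rows_zero => u hu.
  by rewrite -(fA u hu) f0 mulmx0.
have g0 : g != 0.
  apply: contraNneq B0 => g0; apply/eqP; apply: sub_rows_zero => u hu.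
  by rewrite -(gB u hu) g0 mulmx0.
have f1 : f != 1%:M.
  by apply/eqP => f1; move/eqP: g0; apply; rewrite -[g]mul1mx -f1 fg.
have g1 : g != 1%:M.
  by apply/eqP => g1; move/eqP: f0; apply; rewrite -[f]mul1mx -g1 gf.
have jo : jorth f g.
  split; first exact: jprod0 fg gf.
  by split; [rewrite fg mul0mx | rewrite gf mul0mx].
have ef : projE X i = f + g.
  apply: agree_full full _; apply: agree_adds; first apply: agree_adds.
  - move=> u hu; rewrite mulmxDr fA // gA // addr0 projE_id //.
    exact: submx_trans hu (sY j0).
  - move=> u hu; rewrite mulmxDr fB // gB // add0r projE_id //.
    exact: submx_trans hu sB.
  - move=> u hu; rewrite mulmxDr fZ // gZ // addr0.
    exact: proj_mx_0 (capZ HX i) hu.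
case: (Hprim i) => _ [_]; apply; exists f, g.
split; first by split => //; exact/(jprod_idem H2).
split; first by split => //; exact/(jprod_idem H2).
by do 5!(split; first done).
Qed.

Lemma projE_jorth i j : i != j -> jorth (projE X i) (projE X j).
Proof.
move=> ij; have ji : j != i by rewrite eq_sym.
split; first exact: jprod0 (projE_orth HX ij) (projE_orth HX ji).
by rewrite (projE_orth HX ij) (projE_orth HX ji) !mul0mx.
Qed.

Lemma part_i : (forall i, Sym b (projE X i)) <-> perp_decomp b X.
Proof.
split; first by move=> Hs; apply: perp_of_orth; exact: orth_of_sym Hs.
by move=> Hp; exact: sym_of_orth (orth_of_perp Hp).
Qed.

Lemma part_ii : fully_refined b X <-> frame b (projE X).
Proof.
split.
  move=> Hr; split; first exact: primitive_of_refined.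
  by split; [exact: projE_jorth | exact: projE_sum HX].
case=> Hprim _; split.
  by apply: perp_of_orth; exact: orth_of_sym (fun l => proj1 (proj1 (Hprim l))).
exact: refined_of_primitive.
Qed.

End Main.

Section Conj.
Variables (k : fieldType) (n : nat).
Implicit Types (P f g : 'M[k]_n).

Definition cj P f := invmx P *m f *m P.

Lemma cjM P f g : P \in unitmx -> cj P (f *m g) = cj P f *m cj P g.
Proof. by move=> Pu; rewrite /cj !mulmxA mulmxK. Qed.

Lemma cjD P f g : cj P (f + g) = cj P f + cj P g.
Proof. by rewrite /cj mulmxDr mulmxDl. Qed.

Lemma cjZ P (a : k) f : cj P (a *: f) = a *: cj P f.
Proof. by rewrite /cj -scalemxAr -scalemxAl. Qed.

Lemma cj0 P : cj P 0 = 0.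
Proof. by rewrite /cj mulmx0 mul0mx. Qed.

Lemma cj1 P : P \in unitmx -> cj P 1%:M = 1%:M.
Proof. by move=> Pu; rewrite /cj mulmx1 mulVmx. Qed.

Lemma cjK P f : P \in unitmx -> cj (invmx P) (cj P f) = f.
Proof. by move=> Pu; rewrite /cj invmxK !mulmxA mulmxV // mul1mx mulmxK. Qed.

Lemma cjKV P f : P \in unitmx -> cj P (cj (invmx P) f) = f.
Proof. by move=> Pu; rewrite /cj invmxK !mulmxA mulVmx // mul1mx mulmxKV. Qed.

Lemma cj_jprod P f g : P \in unitmx -> cj P (jprod f g) = jprod (cj P f) (cj P g).
Proof. by move=> Pu; rewrite /jprod cjZ cjD !cjM. Qed.

Lemma cj_jorth P f g : P \in unitmx -> jorth f g -> jorth (cj P f) (cj P g).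
Proof.
move=> Pu [j1 [j2 j3]]; split; first by rewrite -cj_jprod // j1 cj0.
by rewrite -!cjM // j2 j3 cj0.
Qed.

Lemma cj_sum P (J : finType) (F : J -> 'M[k]_n) :
  cj P (\sum_j F j) = \sum_j cj P (F j).
Proof. by rewrite /cj mulmx_sumr mulmx_suml. Qed.

End Conj.

Section ConjB.
Variables (k : fieldType) (n m : nat) (b : 'rV[k]_n -> 'rV[k]_n -> 'rV[k]_m).

Lemma isom_inv (a : 'M[k]_n) (ah : 'M[k]_m) :
  isom_star b a ah -> isom_star b (invmx a) (invmx ah).
Proof.
case=> au ahu H; split; rewrite ?unitmx_inv // => u v.
have e := H (u *m invmx a) (v *m invmx a).
by rewrite !mulmxKV // in e; rewrite e mulmxK.
Qed.

Lemma sym_conj (a : 'M[k]_n) (ah : 'M[k]_m) f :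
  isom_star b a ah -> Sym b f -> Sym b (cj a f).
Proof.
case=> au _ H sf u v; rewrite /cj.
have -> : u *m (invmx a *m f *m a) = (u *m invmx a *m f) *m a by rewrite !mulmxA.
have -> : v *m (invmx a *m f *m a) = (v *m invmx a *m f) *m a by rewrite !mulmxA.
have e1 := H (u *m invmx a *m f) (v *m invmx a).
rewrite mulmxKV // in e1.
have e2 := H (u *m invmx a) (v *m invmx a *m f).
rewrite mulmxKV // in e2.
by rewrite e1 e2 sf.
Qed.

Lemma primitive_conj (a : 'M[k]_n) (ah : 'M[k]_m) e :
  isom_star b a ah -> primitive b e -> primitive b (cj a e).
Proof.
move=> Hi [[se ee] [e0 nd]].
have au : a \in unitmx by case: Hi.
have aiu : invmx a \in unitmx by rewrite unitmx_inv.
have Hi' := isom_inv Hi.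
split; first by split; [exact: sym_conj Hi se | rewrite -cj_jprod // ee].
split.
  by apply/eqP => h; move/eqP: e0; apply; rewrite -(@cjK _ _ a e au) h cj0.
move=> [f [g [[sf ff] [[sg gg] [f0 [f1 [g0 [g1 [jo ef]]]]]]]]]; apply: nd.
exists (cj (invmx a) f), (cj (invmx a) g).
split; first by split; [exact: sym_conj Hi' sf | rewrite -cj_jprod // ff].
split; first by split; [exact: sym_conj Hi' sg | rewrite -cj_jprod // gg].
split.
  by apply/eqP => h; move/eqP: f0; apply; rewrite -(@cjKV _ _ a f au) h cj0.
split.
  by apply/eqP => h; move/eqP: f1; apply; rewrite -(@cjKV _ _ a f au) h cj1.
split.
  by apply/eqP => h; move/eqP: g0; apply; rewrite -(@cjKV _ _ a g au) h cj0.
split.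
  by apply/eqP => h; move/eqP: g1; apply; rewrite -(@cjKV _ _ a g au) h cj1.
split; first exact: cj_jorth.
by rewrite -cjD -ef cjK.
Qed.

Lemma frame_conj (a : 'M[k]_n) (ah : 'M[k]_m) (J : finType) (F : J -> 'M[k]_n) :
  isom_star b a ah -> frame b F -> frame b (fun j => invmx a *m F j *m a).
Proof.
move=> Hi [Hp [Ho Hs]].
have au : a \in unitmx by case: Hi.
split; first by move=> j; exact: (primitive_conj Hi (Hp j)).
split; first by move=> i j ij; exact: (cj_jorth au (Ho i j ij)).
by have := cj_sum a F; rewrite Hs cj1 // => ->.
Qed.

End ConjB.

Section ConjX.
Variables (k : fieldType) (n : nat) (I : finType) (X : I -> 'M[k]_n).
Hypothesis HX : direct_decomp X.
Variable a : 'M[k]_n.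
Hypothesis au : a \in unitmx.

Lemma capA i : (X i *m a :&: Zc (fun j => X j *m a) i = 0)%MS.
Proof.
apply: sub_rows_zero => w hw.
have h1 : (w *m invmx a <= X i)%MS.
  rewrite -(mulmxK au (X i)) submxMr //; exact: submx_trans hw (capmxSl _ _).
have h2 : (w *m invmx a <= Zc X i)%MS.
  rewrite -(mulmxK au (Zc X i)) submxMr //; apply: submx_trans hw _.
  apply: submx_trans (capmxSr _ _) _; rewrite /Zc sumsmxMr; exact: submx_refl.
have : (w *m invmx a <= X i :&: Zc X i)%MS by rewrite sub_capmx h1 h2.
rewrite (capZ HX i) submx0 => /eqP h0.
by rewrite -(mulmxKV au w) h0 mul0mx.
Qed.

Lemma projE_conj i : invmx a *m projE X i *m a = projE (fun j => X j *m a) i.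
Proof.
apply: (@agree_full _ _ _ (\sum_j (X j *m a))%MS).
  rewrite -sumsmxMr -{1}(mulVmx au) submxMr //.
  exact: submx_trans (submx1 _) (full_sum HX).
apply: agree_sums => j u _ /submxP [D ->].
rewrite (mulmxA D (X j) a).
set w := D *m X j.
rewrite (mulmxA (w *m a) (invmx a *m projE X i) a) (mulmxA (w *m a) (invmx a) (projE X i)).
rewrite (mulmxK au w).
have hw : (w <= X j)%MS by exact: submxMl.
case: (eqVneq j i) => [ji | ji].
  rewrite -ji in hw *.
  have hp : w *m a *m projE (fun j0 => X j0 *m a) j = w *m a :=
    proj_mx_id (capA j) (submxMr a hw).
  by rewrite (projE_id HX hw) hp.
have hz : (w *m a <= Zc (fun j0 => X j0 *m a) i)%MS.
  exact: (sumsmx_sup j) ji (submxMr a hw).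
by rewrite (projE_0 HX ji hw) mul0mx (proj_mx_0 (capA i) hz).
Qed.

Lemma X_conj i : (X i *m a == invmx a *m projE X i *m a)%MS.
Proof.
rewrite projE_conj; apply/andP; split.
  rewrite -{1}(proj_mx_id (capA i) (submx_refl (X i *m a))).
  exact: submxMl.
by rewrite -[projE _ _]mul1mx; exact: proj_mx_sub.
Qed.

End ConjX.

Unset Implicit Arguments.

Theorem theorem4p29 (k : finFieldType) (n m : nat)
    (b : 'rV[k]_n -> 'rV[k]_n -> 'rV[k]_m)
    (Hodd : (2%N \notin [pchar k]))
    (Hbil : bilinear_map b) (Hherm : hermitian_map b) (Hnd : nondegenerate_map b)
    (I : finType) (X : I -> 'M[k]_n) (HX : direct_decomp X) :
  (* (i) *)
  ((forall i, Sym b (projE X i)) <-> perp_decomp b X) /\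
  (* (ii) *)
  (fully_refined b X <-> frame b (projE X)) /\
  (* (iii) *)
  (perp_decomp b X ->
   forall (alpha : 'M[k]_n) (alphah : 'M[k]_m), isom_star b alpha alphah ->
     (forall i, (X i *m alpha == invmx alpha *m projE X i *m alpha)%MS) /\
     (forall i, invmx alpha *m projE X i *m alpha = projE (fun j => X j *m alpha) i)) /\
  (* in particular: Isom^*(b) acts by conjugation on the frames of Sym(b) *)
  (forall (alpha : 'M[k]_n) (alphah : 'M[k]_m), isom_star b alpha alphah ->
   forall (J : finType) (F : J -> 'M[k]_n), frame b F ->
     frame b (fun j => invmx alpha *m F j *m alpha)).
Proof.
have H2 : (2%:R : k) != 0.
  by apply: contraNneq Hodd => h; rewrite inE /= h eqxx.
split; first by have := part_i Hbil HX.
split; first by have := part_ii Hbil Hnd H2 HX.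
split.
  move=> _ alpha alphah [au _ _]; split => i.
    by have := X_conj HX au i.
  by have := projE_conj HX au i.
move=> alpha alphah Hi J F HF; by have := frame_conj Hi HF.
Qed.
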